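(* Let $\textsc{All}$ denote the set of all languages $L \subseteq \{0,1\}^*$. Then $\mathrm{T}_s(\mathbb{Q}) = \textsc{All}$; that is, for every language $L \subseteq \{0,1\}^*$ there exists a transformer over the rational datatype $\mathbb{Q}$ with (strong) saturated attention, size-preserving embedding function and size-preserving activation functions, which recognizes $L$.
   Context: Datatypes. All values are binary strings. An integer is encoded as a sign bit followed by binary magnitude bits; an unsigned integer omits the sign bit. A rational $r \in \mathbb{Q}$ is encoded as a sign bit $s$ together with a pair $\langle p,q\rangle$ of unsigned integers (padded to equal length and interleaved), representing $(2s-1)p/q$; addition and multiplication are the usual ones followed by reduction to lowest terms ($p,q$ divided by $\gcd(p,q)$). The size $|x|$ of a value $x$ is its length in bits. A function $f:\{0,1\}^*\to\{0,1\}^*$ is size-preserving if there are constants $c,N$ such that $|f(x)| \le c|x|$ for all $x$ with $|x|\ge N$; $\mathcal S$ denotes the set of size-preserving functions (applied to numbers/vectors via their binary encodings; an input pair $(\sigma,i)\in\Sigma\times\mathbb N$ is likewise viewed as a bitstring). Saturated attention. For a score vector $a\in\mathbb D^n$ let $\mathcal M(a)=\{i : a_i=\max_j a_j\}$ and $s(a)_j = 1/|\mathcal M(a)|$ if $j\in\mathcal M(a)$ and $0$ otherwise. Transformer. Over datatype $\mathbb D$ with finite alphabet $\Sigma$, model dimension $k$, $L$ layers and $H$ heads per layer, a transformer consists of an embedding function $\phi:\Sigma\times\mathbb N\to\mathbb D^k$ in $\mathcal S$, scoring functions $s_{\ell,h}:\mathbb D^k\times\mathbb D^k\to\mathbb D$,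 and activation functions $f_\ell$ in $\mathcal S$. On input $w\in\Sigma^n$: $v_{0,i}=\phi(w_i,i)$; $a_{\ell,h,i,j}=s_{\ell,h}(v_{\ell,i},v_{\ell,j})$; the head output is $b_{\ell+1,h,i}=\sum_{j=1}^n \alpha(a_{\ell,h,i,\cdot})_j\, v_{\ell,j}$ with $\alpha$ the attention function and all arithmetic in $\mathbb D$; and $v_{\ell+1,i}=f_{\ell+1}(v_{\ell,i}, b_{\ell+1,1,i},\dots,b_{\ell+1,H,i})$. The transformer recognizes $L\subseteq\Sigma^*$ if there is a rational affine map $W,b$ with $W\cdot v_{L,1}(w)+b>0 \iff w\in L$ for all $w\in\Sigma^*$. $\mathrm T_\alpha(\mathbb D)$ is the class of languages recognized by some such transformer with attention function $\alpha$, datatype $\mathbb D$, some $k$, and embedding and activation functions in $\mathcal S$. *)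

(* Defs.v *)
From HB Require Import structures.
From mathcomp Require Import all_boot all_order all_algebra.
Set Implicit Arguments. Unset Strict Implicit. Unset Printing Implicit Defensive.
Import Order.TTheory GRing.Theory Num.Theory.
Local Open Scope ring_scope.

(* binary representation (most significant bit first, no leading zeros) *)
Fixpoint bin_aux (fuel n : nat) : seq bool :=
  match fuel with
  | 0 => [::]
  | f.+1 => if n is 0 then [::] else rcons (bin_aux f n./2) (odd n)
  end.

Definition enc_nat (n : nat) : seq bool :=
  if n == 0%N then [:: false] else bin_aux n n.

Definition pad (m : nat) (l : seq bool) : seq bool := nseq (m - size l) false ++ l.

Definition interleave (l1 l2 : seq bool) : seq bool :=
  flatten [seq [:: x.1; x.2] | x <- zip l1 l2].

(* rational r = (2s-1) p / q in lowest terms: sign bit s, then <p,q>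
   padded to equal length and interleaved *)
Definition enc_rat (r : rat) : seq bool :=
  let bp := enc_nat `|numq r|%N in
  let bq := enc_nat `|denq r|%N in
  let m := maxn (size bp) (size bq) in
  (0 <= r) :: interleave (pad m bp) (pad m bq).

(* self-delimiting encoding of a tuple of bit strings: every bit doubled,
   each component terminated by the separator 01 *)
Definition enc_tuple (s : seq (seq bool)) : seq bool :=
  flatten [seq flatten [seq [:: b; b] | b <- x] ++ [:: false; true] | x <- s].

Definition enc_ratseq (s : seq rat) : seq bool := enc_tuple (map enc_rat s).

Definition rowseq (k : nat) (v : 'rV[rat]_k) : seq rat := [seq v ord0 j | j <- enum 'I_k].

Definition enc_vec (k : nat) (v : 'rV[rat]_k) : seq bool := enc_ratseq (rowseq v).

(* an input pair (sigma, i) in Sigma x N, with Sigma = {0,1} *)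
Definition enc_pos (x : bool * nat) : seq bool := enc_tuple [:: [:: x.1]; enc_nat x.2].

Definition size_preserving (A B : Type) (encA : A -> seq bool) (encB : B -> seq bool)
  (f : A -> B) : Prop :=
  exists c N : nat, forall x, (N <= size (encA x))%N ->
    (size (encB (f x)) <= c * size (encA x))%N.

Definition amax (a : seq rat) : rat := foldr Num.max (head 0 a) a.

Definition saturated (a : seq rat) (j : nat) : rat :=
  if nth 0 a j == amax a then (count (pred1 (amax a)) a)%:R^-1 else 0.

Record transformer := Transformer {
  tk : nat;                                    (* model dimension *)
  tL : nat;                                    (* number of layers *)
  tH : nat;                                    (* heads per layer *)
  emb : bool * nat -> 'rV[rat]_tk;
  score : nat -> 'I_tH -> 'rV[rat]_tk -> 'rV[rat]_tk -> rat;
  act : nat -> 'rV[rat]_tk * (tH.-tuple 'rV[rat]_tk) -> 'rV[rat]_tk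
                                               (* act l = f_{l+1}, l < L *)
}.

Arguments emb : clear implicits.
Arguments score : clear implicits.
Arguments act : clear implicits.

Definition enc_act_in (k H : nat) (x : 'rV[rat]_k * (H.-tuple 'rV[rat]_k)) : seq bool :=
  enc_ratseq (rowseq x.1 ++ flatten (map (@rowseq k) x.2)).

Definition sizepres_transformer (T : transformer) : Prop :=
  size_preserving enc_pos (@enc_vec (tk T)) (emb T) /\
  forall l, (l < tL T)%N ->
    size_preserving (@enc_act_in (tk T) (tH T)) (@enc_vec (tk T)) (act T l).

Definition head_out (k : nat) (s : 'rV[rat]_k -> 'rV[rat]_k -> rat)
  (vs : seq 'rV[rat]_k) (vi : 'rV[rat]_k) : 'rV[rat]_k :=
  let a := [seq s vi vj | vj <- vs] in
  \sum_(j < size vs) saturated a j *: nth 0 vs j.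

Definition layer (T : transformer) (l : nat) (vs : seq 'rV[rat]_(tk T)) :
  seq 'rV[rat]_(tk T) :=
  [seq act T l (vi, [tuple head_out (score T l h) vs vi | h < tH T]) | vi <- vs].

Fixpoint run (T : transformer) (l : nat) (vs : seq 'rV[rat]_(tk T)) :
  seq 'rV[rat]_(tk T) :=
  match l with 0 => vs | l'.+1 => @layer T l' (run l' vs) end.

(* v_{0,i} = phi(w_i, i), positions numbered from 1 *)
Definition input_vecs (T : transformer) (w : seq bool) : seq 'rV[rat]_(tk T) :=
  [seq emb T (nth false w i, i.+1) | i <- iota 0 (size w)].

(* v_{L,1}(w); for the empty word (no position 1) the zero vector is used *)
Definition output (T : transformer) (w : seq bool) : 'rV[rat]_(tk T) :=
  head 0 (@run T (tL T) (input_vecs T w)).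

Definition dotr (k : nat) (W v : 'rV[rat]_k) : rat := \sum_(i < k) W ord0 i * v ord0 i.

Definition recognizes (T : transformer) (L : seq bool -> Prop) : Prop :=
  exists (W : 'rV[rat]_(tk T)) (b : rat),
    forall w : seq bool, 0 < dotr W (output T w) + b <-> L w.

Definition in_Ts_Q (L : seq bool -> Prop) : Prop :=
  exists T : transformer, sizepres_transformer T /\ recognizes T L.

(* Main.v *)
Require Import Defs.
From mathcomp Require Import all_boot all_order all_algebra.
From mathcomp Require Import zify ring lra.
From Stdlib Require Import ClassicalEpsilon.


Section SNT.

Lemma div2_bound m q : 0 < q -> m.*2 %/ q <= (m %/ q).*2 + 1.
Proof. move=> q0; nia. Qed.

Lemma binom_ge m : 2 ^ m <= 'C(m.*2, m).
Proof.
elim: m => [|m IH] //.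
have h1 : 'C(m.*2, m) <= 'C(m.*2.+1, m).
  case: m {IH} => [|k] //; rewrite [in X in _ <= X]binS; exact: leq_addr.
have h2 := mul_bin_diag (m.*2.+2) m.
rewrite /= in h2.
have e : (m.+1).*2 = m.*2.+2 by rewrite doubleS.
rewrite e.
rewrite -(@leq_pmul2l m.+1) // -h2 expnS.
have -> : m.*2.+2 = 2 * m.+1 by lia.
have := leq_trans IH h1. nia.
Qed.

Lemma sum_le_t N t : \sum_(1 <= k < N) (k <= t) <= t.
Proof.
suff : \sum_(1 <= k < N) (k <= t) = minn N.-1 t by move=> ->; apply: geq_minr.
elim: N => [|N IH]; first by rewrite big_geq // min0n.
case: N IH => [|N] IH; first by rewrite big_geq // min0n.
rewrite big_nat_recr //= IH /=. case: leqP => h; lia.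
Qed.

Lemma logn_bin p m : prime p -> 0 < m -> logn p 'C(m.*2, m) <= trunc_log p m.*2.
Proof.
move=> pp m0; have p1 := prime_gt1 pp.
set t := trunc_log p m.*2.
have hf := @bin_fact m.*2 m (ltac:(lia)).
rewrite (_ : m.*2 - m = m) in hf; last by lia.
have := congr1 (logn p) hf.
rewrite !lognM ?fact_gt0 ?bin_gt0 ?muln_gt0 ?fact_gt0 ?leq_addr //.
rewrite !logn_fact //.
have ext : \sum_(1 <= k < m.+1) m %/ p ^ k = \sum_(1 <= k < m.*2.+1) m %/ p ^ k.
  have hm : m.+1 <= m.*2.+1 by lia.
  rewrite [RHS](big_cat_nat _ (n:=m.+1)) //=.
  rewrite [X in _ = _ + X]big1_seq ?addn0 // => i /andP [_].
  rewrite mem_index_iota => /andP [hi _]. apply: divn_small.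
  apply: leq_trans (ltn_expl i p1). lia.
rewrite ext => E.
have B : \sum_(1 <= k < m.*2.+1) m.*2 %/ p ^ k <=
         \sum_(1 <= k < m.*2.+1) (2 * (m %/ p ^ k) + (k <= t)).
  apply: leq_sum => k _.
  case: (leqP k t) => hk.
    have hq : 0 < p ^ k by rewrite expn_gt0 (ltnW p1).
    have := @div2_bound m _ hq. lia.
  rewrite divn_small ?leq0n //.
  rewrite ltnNge; apply/negP => hk'.
  have := trunc_log_max p1 hk'. rewrite -/t. lia.
rewrite big_split /= -big_distrr /= in B.
have := sum_le_t m.*2.+1 t. lia.
lia.
Qed.

Lemma prod_const_seq (s : seq nat) c : \prod_(i <- s) c = c ^ size s.
Proof. elim: s => [|x s IH]; by rewrite ?big_nil ?big_cons ?IH ?expnS. Qed.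

Lemma pow_logn_bin p m : prime p -> 0 < m -> p ^ logn p 'C(m.*2, m) <= m.*2.
Proof.
move=> pp m0; have p1 := prime_gt1 pp.
apply: leq_trans (trunc_logP p1 _); last by lia.
rewrite leq_exp2l //. exact: logn_bin.
Qed.

Lemma binom_le m : 0 < m -> 'C(m.*2, m) <= m.*2 ^ count prime (iota 0 m.*2.+1).
Proof.
move=> m0.
have C0 : 0 < 'C(m.*2, m) by rewrite bin_gt0; lia.
rewrite {1}(prod_prime_decomp C0) prime_decompE big_map /=.
apply: (@leq_trans (\prod_(p <- primes 'C(m.*2, m)) m.*2)).
  apply: leq_prod => p _.
  case: (boolP (prime p)) => pp; first exact: pow_logn_bin.
  by rewrite lognE (negPf pp) /= expn0; lia.
rewrite prod_const_seq; apply: leq_pexp2l; first lia.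
rewrite -size_filter. apply: uniq_leq_size; first exact: primes_uniq.
move=> p hp. rewrite mem_filter mem_iota /=.
move: (hp); rewrite mem_primes => /and3P [pp _ _].
rewrite pp /=.
have h2 := @pow_logn_bin p m pp m0.
have h1 : 0 < logn p 'C(m.*2, m) by rewrite logn_gt0.
rewrite prime_gt0 //=. apply: leq_trans h2.
rewrite -{1}(expn1 p). apply: leq_pexp2l => //. exact: prime_gt0.
Qed.

Lemma cheb s : 0 < s -> 2 ^ s.-1 <= s * count prime (iota 0 (2 ^ s).+1).
Proof.
move=> s0. set m := 2 ^ s.-1.
have m0 : 0 < m by rewrite expn_gt0.
have e : m.*2 = 2 ^ s by rewrite /m -muln2 mulnC -expnS prednK.
have := leq_trans (binom_ge m) (@binom_le m m0).
rewrite e -expnM leq_exp2l //.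
Qed.

Lemma pi_big i l : i < 2 ^ l -> i < count prime (iota 0 (2 ^ (l.*2 + 4)).+1).
Proof.
move=> il.
have := @cheb (l.*2 + 4) (ltac:(lia)).
set P := count _ _.
have e1 : l.+2 < 2 ^ l.+2 by apply: ltn_expl.
have e2 : 2 ^ (l.*2 + 4).-1 = 2 ^ l.+2 * 2 ^ l.+1 by rewrite -expnD; congr (_ ^ _); lia.
have e3 : 2 ^ l.+1 = 2 * 2 ^ l by rewrite expnS.
rewrite e2 e3 => h.
rewrite ltnNge; apply/negP => hP.
nia.
Qed.

End SNT.

Section SEnc.

Lemma size_bin_aux_le f n l : n < 2 ^ l -> size (bin_aux f n) <= l.
Proof.
elim: f n l => [|f IH] n l h //=. case: n h => [|n] h //=.
rewrite size_rcons. case: l h => [|l] h; first by rewrite expn0 in h.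
apply: IH. by rewrite ltn_uphalf_double -mul2n -expnS.
Qed.

Lemma bin_aux_lower f n : n <= f -> n < 2 ^ size (bin_aux f n).
Proof.
elim: f n => [|f IH] n h; first by case: n h.
case: n h => [|n] h //=. rewrite size_rcons expnS.
have e : odd n.+1 + (uphalf n).*2 = n.+1 := odd_double_half n.+1.
have h' : uphalf n <= f by case: (odd n.+1) e => /=; lia.
have := IH _ h'. case: (odd n.+1) e => /=; lia.
Qed.

Lemma size_enc_nat_le n l : n < 2 ^ l -> 0 < l -> size (enc_nat n) <= l.
Proof.
rewrite /enc_nat; case: eqP => [_ _ //|_ h _]. exact: size_bin_aux_le.
Qed.

Lemma enc_nat_lower n : n < 2 ^ size (enc_nat n).
Proof.
rewrite /enc_nat; case: eqP => [->//|_]. exact: bin_aux_lower.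
Qed.

Lemma size_interleave l1 l2 : size l1 = size l2 -> size (interleave l1 l2) = (size l1).*2.
Proof.
elim: l1 l2 => [|a l1 IH] [|b l2] //= [e]. by rewrite IH.
Qed.

Lemma size_pad m l : size l <= m -> size (pad m l) = m.
Proof. move=> h; rewrite /pad size_cat size_nseq; lia. Qed.

Lemma size_enc_rat r :
  size (enc_rat r) = (maxn (size (enc_nat `|numq r|)) (size (enc_nat `|denq r|))).*2.+1.
Proof.
rewrite /enc_rat /= size_interleave !size_pad //; try apply: leq_maxl; try apply: leq_maxr.
Qed.

Lemma size_enc_rat_le r t : (`|numq r| < 2 ^ t)%N -> (`|denq r| < 2 ^ t)%N -> 0 < t ->
  size (enc_rat r) <= t.*2.+1.
Proof.
move=> h1 h2 t0. rewrite size_enc_rat ltnS leq_double geq_max.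
by rewrite !size_enc_nat_le.
Qed.

Lemma size_enc_tuple s : size (enc_tuple s) = sumn [seq (size x).*2 + 2 | x <- s].
Proof.
elim: s => [|x s IH] //=. rewrite /enc_tuple /= size_cat /= -/(enc_tuple s) IH size_cat /=.
suff -> : size (flatten [seq [:: b; b] | b <- x]) = (size x).*2 by lia.
elim: x => [|b x IHx] //=. rewrite IHx. lia.
Qed.

Lemma size_enc_ratseq_le s B : (forall x, x \in s -> size (enc_rat x) <= B) ->
  size (enc_ratseq s) <= size s * (B.*2 + 2).
Proof.
rewrite /enc_ratseq size_enc_tuple.
elim: s => [|x s IH] h; first done.
have hx := h x (mem_head x s).
have := IH (fun y hy => h y (mem_behead (s:=x::s) hy)). move: hx. simpl. lia.
Qed.

Lemma size_enc_vec_le k (v : 'rV[rat]_k) B : (forall j, size (enc_rat (v ord0 j)) <= B) ->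
  size (enc_vec v) <= k * (B.*2 + 2).
Proof.
move=> h. rewrite /enc_vec.
have e : size (rowseq v) = k by rewrite /rowseq size_map size_enum_ord.
rewrite -[X in _ <= X * _]e.
apply: size_enc_ratseq_le => x /mapP [j _ ->]. exact: h.
Qed.

End SEnc.

Section SPr.
Import Order.TTheory GRing.Theory Num.Theory.

Definition plist N := [seq p <- iota 0 N.+1 | prime p].
Definition sb i := (size (enc_nat i)).*2 + 4.
Definition pr i := nth 0 (plist (2 ^ sb i)) i.

Lemma pr_lt i : i < size (plist (2 ^ sb i)).
Proof. rewrite size_filter. apply: pi_big. exact: enc_nat_lower. Qed.

Lemma pr_mem i : pr i \in plist (2 ^ sb i).
Proof. exact: mem_nth (pr_lt i). Qed.

Lemma pr_prime i : prime (pr i).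
Proof. by have := pr_mem i; rewrite mem_filter => /andP []. Qed.

Lemma pr_le i : pr i <= 2 ^ sb i.
Proof. by have := pr_mem i; rewrite mem_filter mem_iota => /andP [_ /andP [_ h]]. Qed.

Lemma plist_prefix N M : N <= M ->
  plist M = plist N ++ [seq p <- iota N.+1 (M - N) | prime p].
Proof.
move=> h; rewrite /plist -filter_cat.
have -> : M.+1 = N.+1 + (M - N) by lia.
by rewrite iotaD.
Qed.

Lemma pr_nth i N : 2 ^ sb i <= N -> pr i = nth 0 (plist N) i.
Proof. move=> h; by rewrite (@plist_prefix _ _ h) nth_cat pr_lt. Qed.

Lemma pr_inj i j : pr i = pr j -> i = j.
Proof.
move=> e. set N := maxn (2 ^ sb i) (2 ^ sb j).
have hi : i < size (plist N).
  rewrite (@plist_prefix (2 ^ sb i) N) ?leq_maxl // size_cat. have := pr_lt i. lia.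
have hj : j < size (plist N).
  rewrite (@plist_prefix (2 ^ sb j) N) ?leq_maxr // size_cat. have := pr_lt j. lia.
move: e. rewrite (@pr_nth i N) ?leq_maxl // (@pr_nth j N) ?leq_maxr //.
move/eqP. rewrite nth_uniq //; first by move/eqP.
by rewrite filter_uniq // iota_uniq.
Qed.

Local Open Scope ring_scope.

Definition emb0 (x : bool * nat) : 'rV[rat]_2 :=
  \row_(j < 2) if j == ord0 then (x.2)%:R else if x.1 then ((pr x.2)%:R)^-1 else 0.

Lemma size_enc_rat_int (z : int) t : (`|z| < 2 ^ t)%N -> (0 < t)%N ->
  (size (enc_rat z%:~R) <= t.*2.+1)%N.
Proof.
move=> h t0; apply: size_enc_rat_le => //; rewrite ?numq_int ?denq_int //.
by rewrite (ltn_exp2l 0).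
Qed.

Lemma size_enc_rat_inv (p : nat) t : (p < 2 ^ t)%N -> (0 < p)%N -> (0 < t)%N ->
  (size (enc_rat (p%:R)^-1) <= t.*2.+1)%N.
Proof.
move=> h p0 t0.
have pn : (p%:Z != 0) by rewrite eqz_nat; lia.
have e : (p%:R : rat) = (p%:Z)%:~R by rewrite pmulrn.
apply: size_enc_rat_le => //.
  have : (numq (p%:R : rat)^-1)%:~R = (1 : rat).
    rewrite numqE e denqVz // ger0_norm // mulVf //.
    by rewrite intr_eq0.
  rewrite -[1 : rat]/((1 : int)%:~R) => /intr_inj ->. by rewrite (ltn_exp2l 0).
by rewrite e denqVz.
Qed.

Lemma emb0_size x : (size (enc_vec (emb0 x)) <= 8 * size (enc_pos x))%N.
Proof.
case: x => s i.
have hpos : size (enc_pos (s, i)) = ((size (enc_nat i)).*2 + 6)%N.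
  rewrite /enc_pos size_enc_tuple /=. lia.
rewrite hpos.
set t := (sb i).+1.
have ht : (i < 2 ^ t)%N.
  apply: leq_trans (enc_nat_lower i) _. rewrite leq_exp2l //. rewrite /t /sb. lia.
have hp : (pr i < 2 ^ t)%N.
  apply: leq_ltn_trans (pr_le i) _. by rewrite ltn_exp2l.
apply: leq_trans (@size_enc_vec_le _ _ t.*2.+1 _) _.
  move=> j; rewrite mxE. case: (j == ord0).
    have -> : (i%:R : rat) = (i%:Z)%:~R by rewrite pmulrn.
    by apply: size_enc_rat_int.
  case: (s) => /=.
    apply: size_enc_rat_inv => //. exact: prime_gt0 (pr_prime i).
  rewrite /t; lia.
rewrite /t /sb. lia.
Qed.

End SPr.

Section SInj.
Import Order.TTheory GRing.Theory Num.Theory.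
Local Open Scope ring_scope.

Definition term (b : bool) (j : nat) : rat := if b then ((pr j.+1)%:R)^-1 else 0.

Lemma not_dvd n m : (m <= n)%N -> ~~ (pr n.+1 %| \prod_(j < m) pr j.+1)%N.
Proof.
elim: m => [|m IH] h.
  by rewrite big_ord0 Euclid_dvd1 // pr_prime.
rewrite big_ord_recr /= Euclid_dvdM ?pr_prime // negb_or IH /=; last by lia.
rewrite dvdn_prime2 ?pr_prime //. apply/eqP => /pr_inj. lia.
Qed.

Lemma pr_gt0 j : (0 < pr j)%N.
Proof. exact: prime_gt0 (pr_prime j). Qed.

Lemma sum_int n (f : nat -> bool) : exists N : nat,
  (\sum_(j < n) term (f j) j) * (\prod_(j < n) pr j.+1)%:R = N%:R.
Proof.
elim: n => [|n [N IH]]; first by exists 0%N; rewrite !big_ord0 mul0r.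
exists (N * pr n.+1 + (if f n then \prod_(j < n) pr j.+1 else 0))%N.
rewrite big_ord_recr big_ord_recr /= natrD !natrM -IH.
have q0 : ((pr n.+1)%:R : rat) != 0 by rewrite pnatr_eq0; have := pr_gt0 n.+1; lia.
rewrite /term; case: (f n) => /=; last by rewrite addr0 addr0 mulrA.
field. exact: q0.
Qed.

Lemma sum_inj n (f g : nat -> bool) :
  \sum_(j < n) term (f j) j = \sum_(j < n) term (g j) j -> forall j, (j < n)%N -> f j = g j.
Proof.
elim: n => [|n IH] e j hj; first by [].
move: e; rewrite !big_ord_recr /=.
have key : forall f g : nat -> bool, f n = true -> g n = false ->
  \sum_(i < n) term (f i) i + term (f n) n <> \sum_(i < n) term (g i) i + term (g n) n.
  move=> f' g' hf hg; rewrite /term hf hg addr0 => E.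
  have [N1 h1] := sum_int n f'. have [N2 h2] := sum_int n g'.
  set P := (\prod_(j < n) pr j.+1)%N in h1 h2.
  have := congr1 (fun x => x * P%:R * (pr n.+1)%:R) E.
  rewrite mulrDl h2 mulrDl h1 -mulrA [P%:R * _]mulrC mulrA mulVf; last first.
    rewrite pnatr_eq0. have := pr_gt0 n.+1. lia.
  rewrite mul1r -!natrM -natrD => /eqP. rewrite eqr_nat => /eqP E2.
  have : (pr n.+1 %| P)%N.
    by rewrite -(dvdn_addr _ (dvdn_mull N1 (dvdnn (pr n.+1)))) E2 dvdn_mull.
  by apply/negP; apply: not_dvd.
case hfn : (f n); case hgn : (g n).
- move/addIr => e. case: (ltnP j n) => hjn; first exact: IH e j hjn.
  have -> : j = n by lia. by rewrite hfn hgn.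
- by move=> E; case: (key f g hfn hgn); rewrite hfn hgn.
- by move=> E; case: (key g f hgn hfn); rewrite hfn hgn.
- move/addIr => e. case: (ltnP j n) => hjn; first exact: IH e j hjn.
  have -> : j = n by lia. by rewrite hfn hgn.
Qed.

End SInj.

Section SMain.
Import Order.TTheory GRing.Theory Num.Theory.
Local Open Scope ring_scope.

Definition vecs (w : seq bool) : seq 'rV[rat]_2 :=
  [seq emb0 (nth false w i, i.+1) | i <- iota 0 (size w)].
Definition Bfun (w : seq bool) : 'rV[rat]_2 :=
  head_out (fun _ _ => 0) (vecs w) (head 0 (vecs w)).

Lemma map_const_nseq (T : Type) (s : seq T) (c : rat) : [seq c | _ <- s] = nseq (size s) c.
Proof. by elim: s => //= x s ->. Qed.

Lemma sat_const (T : Type) (s : seq T) j : saturated [seq 0 | _ <- s] j = (size s)%:R^-1.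
Proof.
rewrite map_const_nseq /saturated /amax.
have -> : foldr Num.max (head 0 (nseq (size s) (0 : rat))) (nseq (size s) 0) = 0.
  elim: (size s) => //= n IH. case: n IH => //= n IH. by rewrite IH maxxx.
by rewrite nth_nseq if_same eqxx count_nseq /= mul1n.
Qed.

Lemma sum_eqn m n (G : nat -> 'rV[rat]_2) : m = n -> \sum_(j < m) G j = \sum_(j < n) G j.
Proof. by move=> ->. Qed.

Lemma Bfun_eq w : Bfun w = \sum_(j < size w) (size w)%:R^-1 *: emb0 (nth false w j, j.+1).
Proof.
rewrite /Bfun /head_out.
set a := map _ _. have -> : a = [seq 0 | _ <- vecs w] by [].
under eq_bigr => j _ do rewrite sat_const.
have hs : size (vecs w) = size w by rewrite size_map size_iota.
rewrite (@sum_eqn _ _ (fun j => (size (vecs w))%:R^-1 *: nth 0 (vecs w) j) hs) hs.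
apply: eq_bigr => [[j hj]] _ /=.
rewrite /vecs (nth_map 0%N); last by rewrite size_iota; lia.
by rewrite nth_iota; last lia.
Qed.

Lemma Bfun_coord w c : Bfun w ord0 c =
  (size w)%:R^-1 * \sum_(j < size w) emb0 (nth false w j, j.+1) ord0 c.
Proof.
rewrite Bfun_eq summxE mulr_sumr. apply: eq_bigr => j _. by rewrite mxE.
Qed.

Lemma sum_nat_formula n : (\sum_(j < n) (j.+1)%:R : rat) * 2 = (n * n.+1)%:R.
Proof.
elim: n => [|n IH]; first by rewrite big_ord0 mul0r.
rewrite big_ord_recr /= mulrDl IH -natrM -natrD. congr (_%:R). lia.
Qed.

Lemma coord0 w : w <> [::] -> Bfun w ord0 ord0 = (size w).+1%:R / 2.
Proof.
move=> hw. rewrite Bfun_coord.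
have -> : \sum_(j < size w) emb0 (nth false w j, j.+1) ord0 ord0 = \sum_(j < size w) (j.+1)%:R.
  apply: eq_bigr => j _. by rewrite mxE eqxx.
have n0 : ((size w)%:R : rat) != 0 by rewrite pnatr_eq0; case: w hw.
have := sum_nat_formula (size w). move: (\sum_(j < size w) _) => S hS.
rewrite natrM in hS.
have -> : S = (size w)%:R * (size w).+1%:R / 2 by rewrite -hS; field.
field. exact: n0.
Qed.

Definition ord1' : 'I_2 := Ordinal (isT : (1 < 2)%N).

Lemma coord1 w : Bfun w ord0 ord1' =
  (size w)%:R^-1 * \sum_(j < size w) term (nth false w j) j.
Proof.
rewrite Bfun_coord. congr (_ * _). apply: eq_bigr => j _. by rewrite mxE.
Qed.

Lemma Bfun_inj w w' : w <> [::] -> w' <> [::] -> Bfun w = Bfun w' -> w = w'.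
Proof.
move=> hw hw' E.
have e0 := congr1 (fun v : 'rV[rat]_2 => v ord0 ord0) E. rewrite /= !coord0 // in e0.
have hn : size w = size w'.
  have : ((size w).+1%:R : rat) = (size w').+1%:R.
    by apply: (mulIf (x := 2^-1)) => //; rewrite !mulrA.
  by move/eqP; rewrite eqr_nat => /eqP [].
have e1 := congr1 (fun v : 'rV[rat]_2 => v ord0 ord1') E. rewrite /= !coord1 -hn in e1.
have n0 : ((size w)%:R^-1 : rat) != 0 by rewrite invr_eq0 pnatr_eq0; case: w hw {E e0 e1 hn}.
move/(mulfI n0): e1 => e1.
apply: (eq_from_nth (x0 := false) hn) => j hj.
exact: (@sum_inj _ (nth false w) (nth false w') e1 j hj).
Qed.

Definition dec (P : Prop) : bool := if excluded_middle_informative P then true else false.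
Lemma decP (P : Prop) : dec P = true <-> P.
Proof. rewrite /dec; case: excluded_middle_informative => //. Qed.

Definition act0 (L : seq bool -> Prop) (x : 'rV[rat]_2 * 1.-tuple 'rV[rat]_2) : 'rV[rat]_2 :=
  \row_(j < 2) if j == ord0 then
     (if dec (exists w, w <> [::] /\ L w /\ Bfun w = tnth x.2 ord0) then 1 else -1)
   else 0.

Definition TT (L : seq bool -> Prop) : transformer :=
  @Transformer 2 1 1 emb0 (fun _ _ _ _ => 0) (fun _ => act0 L).

Lemma act0_size L x : (size (enc_vec (act0 L x)) <= 16)%N.
Proof.
apply: leq_trans (@size_enc_vec_le _ _ 3 _) _ => // j.
rewrite mxE. case: (j == ord0); last by [].
by case: dec.
Qed.

Definition Wv : 'rV[rat]_2 := \row_(j < 2) if j == ord0 then 1 else 0.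

Lemma dotrW (v : 'rV[rat]_2) : dotr Wv v = v ord0 ord0.
Proof.
rewrite /dotr !big_ord_recr big_ord0 /= !mxE /=.
have -> : (ord_max : 'I_2) = ord1' by apply: val_inj.
have -> : (widen_ord (leqnSn 1) ord_max : 'I_2) = ord0 by apply: val_inj.
rewrite mul0r mul1r add0r addr0. done.
Qed.

Lemma output_nil L : output (TT L) [::] = 0.
Proof. by []. Qed.

Lemma output_cons L a w : output (TT L) (a :: w) =
  act0 L (emb0 (a, 1%N), [tuple Bfun (a :: w) | h < 1]).
Proof. reflexivity. Qed.


End SMain.

Import Order.TTheory GRing.Theory Num.Theory.
Local Open Scope ring_scope.

Theorem proposition1 : forall L : seq bool -> Prop, in_Ts_Q L.
Proof.
move=> L. exists (TT L). split.
  split.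
    by exists 8%N, 0%N => x _; exact: emb0_size.
  move=> l _. exists 16%N, 1%N => x hx.
  apply: leq_trans (act0_size L x) _. by rewrite leq_pmulr.
exists Wv, (if dec (L [::]) then 1/2 else -(1/2)) => w.
rewrite dotrW. case: w => [|a w].
  rewrite output_nil mxE add0r.
  case hd : (dec (L [::])); move: hd.
    by move/decP => h; split => // _; lra.
  move=> h; split; first lra.
  by move=> hL; move: h; have := (proj2 (decP _) hL) => ->.
rewrite output_cons mxE eqxx tnth_mktuple.
set b := (if dec (L [::]) then _ else _).
have hb : b = 1/2 \/ b = -(1/2) by rewrite /b; case: dec; [left|right].
case hd : dec; move: hd.
  move/decP => [w' [hw' [hL E]]].
  have := @Bfun_inj w' (a :: w) hw' (ltac:(by [])) E => <-.
  split => // _. case: hb => ->; lra.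
move=> hd. split.
  move=> h. exfalso. case: hb => hb; rewrite hb in h; lra.
move=> hL. have : dec (exists w0, w0 <> [::] /\ L w0 /\ Bfun w0 = Bfun (a :: w)).
  apply/decP. by exists (a :: w).
by rewrite hd.
Qed.
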